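(* Let $\{X_i\}_{i\ge1}$ be i.i.d. symmetric random variables with $P(X_1=0)=0$, belonging to the domain of attraction of the $N(0,1)$ distribution, and let $V_j=(\sum_{i=1}^j X_i^2)^{1/2}$. Then for all integers $1\le j<k$, \[ E\Big(\frac{X_{j+1}^2}{V_{j+1}^2}\,\frac{X_{k+1}^2}{V_{k+1}^2}\Big)=\frac{1}{(j+1)(k+1)}. \]
   Context: A random variable $X$ is in the domain of attraction of $N(0,1)$ if there exist constants $a_n>0$ such that $(X_1+\cdots+X_n)/a_n$ converges in distribution to $N(0,1)$ for i.i.d. copies $X_i$ of $X$. *)

(* Defs.v *)
From HB Require Import structures.
From mathcomp Require Import all_boot all_order all_algebra.
From mathcomp Require Import all_classical all_reals all_analysis.
Set Implicit Arguments. Unset Strict Implicit. Unset Printing Implicit Defensive.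
Import Order.TTheory GRing.Theory Num.Theory.
Import numFieldNormedType.Exports.
Local Open Scope classical_set_scope.
Local Open Scope ring_scope.

Definition mutually_independent d (T : measurableType d) (R : realType)
    (P : probability T R) (X : nat -> {RV P >-> R}) : Prop :=
  forall (s : seq nat) (B : nat -> set R),
    uniq s -> (forall i, measurable (B i)) ->
    P (\bigcap_(i in [set` s]) (X i @^-1` B i)) =
    (\prod_(i <- s) P (X i @^-1` B i))%E.

Definition identically_distributed d (T : measurableType d) (R : realType)
    (P : probability T R) (X : nat -> {RV P >-> R}) : Prop :=
  forall i (B : set R), measurable B ->
    P (X i @^-1` B) = P (X 0%N @^-1` B).

Definition iid d (T : measurableType d) (R : realType)
    (P : probability T R) (X : nat -> {RV P >-> R}) : Prop :=
  mutually_independent X /\ identically_distributed X.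

Definition symmetric_rv d (T : measurableType d) (R : realType)
    (P : probability T R) (Y : {RV P >-> R}) : Prop :=
  forall B : set R, measurable B ->
    P (Y @^-1` B) = P ((fun w => - Y w) @^-1` B).

(* Convergence in distribution of a sequence of real-valued (measurable)
   functions to the standard normal law N(0,1): pointwise convergence of the
   distribution functions (N(0,1) has a continuous cdf, so every point is a
   continuity point). *)
Definition cvg_in_distribution_to_std_normal d (T : measurableType d)
    (R : realType) (P : probability T R) (Z : nat -> T -> R) : Prop :=
  forall x : R,
    (fun n => fine (P [set w | Z n w <= x])) @ \oo -->
      fine (normal_prob 0 1 `]-oo, x]).

(* Domain of attraction of N(0,1) for the common law of the i.i.d. sequence X
   (X 0, X 1, ... are the i.i.d. copies X_1, X_2, ...): there are constants
   a_n > 0 with (X_1 + ... + X_n)/a_n converging in distribution to N(0,1). *)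
Definition in_domain_of_attraction_std_normal d (T : measurableType d)
    (R : realType) (P : probability T R) (X : nat -> {RV P >-> R}) : Prop :=
  exists a : nat -> R, (forall n, 0 < a n) /\
    cvg_in_distribution_to_std_normal P
      (fun n w => (\sum_(i < n) X i w) / a n).

(* V_j^2 = sum_{i=1}^j X_i^2  (paper indexing; X_i is X (i-1) here). *)
Definition Vsq d (T : measurableType d) (R : realType)
    (P : probability T R) (X : nat -> {RV P >-> R}) (j : nat) (w : T) : R :=
  \sum_(i < j) (X i w) ^+ 2.

(* Main.v *)
Require Import Defs.
From HB Require Import structures.
From mathcomp Require Import all_boot all_order all_algebra.
From mathcomp Require Import all_classical all_reals all_analysis.
From mathcomp Require Import measurable_realfun perm.
From mathcomp Require Import zify lra.
Import Order.TTheory GRing.Theory Num.Theory.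
Local Open Scope classical_set_scope.
Local Open Scope ring_scope.

Section Fv.
Context d (T : measurableType d) (R : realType) (P : probability T R)
  (X : nat -> {RV P >-> R}) (n : nat).

Definition Fv (s : 'I_n -> nat) (w : T) : n.-tuple R := [tuple X (s i) w | i < n].

Lemma measurable_Fv s : measurable_fun setT (Fv s).
Proof.
apply/measurable_fun_tnthP => i.
rewrite /comp /Fv.
under eq_fun do rewrite tnth_mktuple.
exact: measurable_funPT.
Qed.

HB.instance Definition _ s := isMeasurableFun.Build _ _ _ _ (Fv s) (measurable_Fv s).

Definition rect (B : 'I_n -> set R) : set (n.-tuple R) :=
  [set t | forall i, B i (tnth t i)].

Lemma P_Fv_rect s (B : 'I_n -> set R) :
  mutually_independent X -> identically_distributed X -> injective s ->
  (forall i, measurable (B i)) ->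
  P (Fv s @^-1` rect B) = (\prod_(i < n) P (X 0%N @^-1` B i))%E.
Proof.
move=> hind hid sinj mB.
pose B' (m : nat) : set R := if [pick i | s i == m] is Some i then B i else setT.
have B's i : B' (s i) = B i.
  rewrite /B'; case: pickP => [j /eqP /sinj -> //|/(_ i)]; by rewrite eqxx.
have mB' m : measurable (B' m) by rewrite /B'; case: pickP.
have := hind (map s (index_enum 'I_n)) B'.
rewrite map_inj_uniq // index_enum_uniq => /(_ isT mB').
have -> : \bigcap_(m in [set` map s (index_enum 'I_n)]) X m @^-1` B' m
          = Fv s @^-1` rect B.
  apply/seteqP; split => w /=.
    move=> h i; rewrite /Fv tnth_mktuple -B's; apply: h => /=.
    by apply/mapP; exists i => //; rewrite mem_index_enum.
  move=> h m /= /mapP [i _ ->]; rewrite B's; have := h i.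
  by rewrite /Fv tnth_mktuple.
move=> ->; rewrite big_map; apply: eq_bigr => i _.
by rewrite B's hid.
Qed.
End Fv.

Arguments rect {R n} B.
Section gen.
Context (R : realType) (n : nat).

Definition rects : set (set (n.-tuple R)) :=
  [set A | exists2 B : 'I_n -> set R, (forall i, measurable (B i)) & A = rect B].

Lemma rect_measurable (B : 'I_n -> set R) : (forall i, measurable (B i)) -> measurable (rect B).
Proof.
move=> mB.
have -> : rect B = \bigcap_(i in [set: 'I_n]) ((fun t : n.-tuple R => tnth t i) @^-1` B i).
  apply/seteqP; split => t /=.
    by move=> h i _; exact: h.
  by move=> h i; exact: h.
apply: fin_bigcap_measurable; first exact: finite_finset.
move=> i _; rewrite -[X in measurable X]setTI.
exact: (measurable_tnth i).
Qed.

Lemma tuple_measurableE : measurable = <<s rects >>.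
Proof.
apply/seteqP; split.
  apply: smallest_sub; first exact: smallest_sigma_algebra.
  apply: (big_ind (fun X => X `<=` <<s rects>>)) => //.
    by move=> A B hA hB C [/hA|/hB].
  move=> i _ A [C mC <-]; apply: sub_sigma_algebra.
  exists (fun l => if l == i then C else setT).
    by move=> l; case: ifP.
  apply/seteqP; split => t /=.
    by move=> [_ h] l; case: eqP => [->|].
  by move=> h; split => //; have := h i; rewrite eqxx.
apply: smallest_sub; first exact: sigma_algebra_measurable.
by move=> A [B mB ->]; exact: rect_measurable.
Qed.
End gen.

Arguments Fv {d T R P} X {n} s w.
Arguments P_Fv_rect {d T R P} X {n} s B.

Section main.
Context d (T : measurableType d) (R : realType) (P : probability T R)
  (X : nat -> {RV P >-> R}) (n : nat).
Hypotheses (hind : mutually_independent X) (hid : identically_distributed X).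

Lemma dist_eq (s1 s2 : 'I_n -> nat) : injective s1 -> injective s2 ->
  forall A, measurable A ->
  distribution P (Fv X s1) A = distribution P (Fv X s2) A.
Proof.
move=> i1 i2.
apply: (measure_unique (@rects R n) (fun _ => setT)).
- exact: tuple_measurableE.
- move=> _ _ [B1 mB1 ->] [B2 mB2 ->].
  exists (fun i => B1 i `&` B2 i); first by move=> i; exact: measurableI.
  by apply/seteqP; split => t /=; [move=> [h1 h2] i; split|move=> h; split => i; case: (h i)].
- move=> _; exists (fun _ => setT) => //.
  by apply/seteqP; split.
- by apply/seteqP; split => // t _; exists 0%N.
- move=> _ [B mB ->].
  rewrite /distribution /pushforward /=.
  exact: (etrans (P_Fv_rect X s1 B hind hid i1 mB) (esym (P_Fv_rect X s2 B hind hid i2 mB))).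
- move=> _; apply: (le_lt_trans (probability_le1 _ measurableT)).
  exact: ltry.
Qed.

Lemma int_eq (s1 s2 : 'I_n -> nat) (h : n.-tuple R -> \bar R) :
  injective s1 -> injective s2 ->
  measurable_fun setT h -> (forall t, (0 <= h t)%E) ->
  (\int[P]_w h (Fv X s1 w) = \int[P]_w h (Fv X s2 w))%E.
Proof.
move=> i1 i2 mh h0.
have := ge0_integral_distribution (Fv X s1) mh h0.
have := ge0_integral_distribution (Fv X s2) mh h0.
move=> <- <-.
apply: eq_measure_integral => A mA _.
exact: dist_eq.
Qed.
End main.

Lemma sum_perm (R : realType) m (tau : {perm 'I_m}) (p : pred 'I_m) (F : 'I_m -> R) :
  (forall i, p (tau i) = p i) -> \sum_(i < m | p i) F (tau i) = \sum_(i < m | p i) F i.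
Proof.
move=> hp; rewrite [RHS](reindex_inj (h := tau) (@perm_inj _ tau)).
by apply: eq_bigl => i; rewrite hp.
Qed.

Section alg.
Context (R : realType) (j k : nat) (hjk : (j < k)%N).
Let n := k.+1.
Definition jo : 'I_n := @Ordinal n j (ltnW hjk).
Definition ko : 'I_n := ord_max.
Definition SJ (u : 'I_n -> R) := \sum_(i < n | (i < j.+1)%N) u i ^+ 2.
Definition SK (u : 'I_n -> R) := \sum_(i < n) u i ^+ 2.
Definition G (a : 'I_n) (u : 'I_n -> R) := u a ^+ 2 / SJ u * (u ko ^+ 2 / SK u).
Definition C (a : 'I_n) (u : 'I_n -> R) := u a ^+ 2 / SK u.

Lemma G_perm (a : 'I_n) (u : 'I_n -> R) : (a < j.+1)%N -> G jo (u \o tperm a jo) = G a u.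
Proof.
move=> ha.
have hSJ : SJ (u \o tperm a jo) = SJ u.
  rewrite /SJ; have := @sum_perm R n (tperm a jo) (fun i : 'I_n => (i < j.+1)%N) (fun i => u i ^+ 2).
  apply.
  by move=> i; case: tpermP => [->|->|] //=; rewrite ha ltnSn.
have hSK : SK (u \o tperm a jo) = SK u.
  by rewrite /SK; apply: (@sum_perm R n (tperm a jo) xpredT (fun i => u i ^+ 2)).
rewrite /G hSJ hSK /= tpermR tpermD //.
  by rewrite -val_eqE /=; apply/eqP; lia.
by rewrite -val_eqE /=; apply/eqP; lia.
Qed.

Lemma C_perm (a : 'I_n) (u : 'I_n -> R) : C ko (u \o tperm a ko) = C a u.
Proof.
have hSK : SK (u \o tperm a ko) = SK u.
  by rewrite /SK; apply: (@sum_perm R n (tperm a ko) xpredT (fun i => u i ^+ 2)).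
by rewrite /C hSK /= tpermR.
Qed.

Lemma S_pos (u : 'I_n -> R) (p : pred 'I_n) : p ord0 -> u ord0 != 0 ->
  0 < \sum_(i < n | p i) u i ^+ 2.
Proof.
move=> p0 u0; rewrite (bigD1 ord0) //=.
have : 0 <= \sum_(i < n | p i && (i != ord0)) u i ^+ 2 by apply: sumr_ge0 => i _; exact: sqr_ge0.
have : 0 < u ord0 ^+ 2 by rewrite lt0r sqrf_eq0 u0 sqr_ge0.
lra.
Qed.

Lemma G_sum (u : 'I_n -> R) : u ord0 != 0 ->
  \sum_(a < n | (a < j.+1)%N) G a u = C ko u.
Proof.
move=> u0.
have hJ : SJ u != 0 by rewrite gt_eqF // /SJ; apply: S_pos.
rewrite /G /C.
under eq_bigr do rewrite -mulrA.
by rewrite -big_distrl /= -/(SJ u) mulrA divff // mul1r.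
Qed.

Lemma C_sum (u : 'I_n -> R) : u ord0 != 0 -> \sum_(a < n) C a u = 1.
Proof.
move=> u0.
have hK : SK u != 0 by rewrite gt_eqF // /SK; apply: S_pos.
by rewrite /C -big_distrl /= -/(SK u) divff.
Qed.

Lemma G_ge0 (a : 'I_n) (u : 'I_n -> R) : 0 <= G a u.
Proof.
rewrite /G; apply: mulr_ge0; apply: divr_ge0; rewrite ?sqr_ge0 //;
  apply: sumr_ge0 => i _; exact: sqr_ge0.
Qed.

Lemma C_ge0 (a : 'I_n) (u : 'I_n -> R) : 0 <= C a u.
Proof.
rewrite /C; apply: divr_ge0; rewrite ?sqr_ge0 //;
  apply: sumr_ge0 => i _; exact: sqr_ge0.
Qed.
End alg.

Lemma measurable_inv (R : realType) : measurable_fun [set: R] (@GRing.inv R).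
Proof.
have -> : [set: R] = [set 0] `|` ~` [set 0].
  by rewrite setUv.
apply/measurable_funU => //; first exact: measurableC.
split; first exact: measurable_fun_set1.
apply: open_continuous_measurable_fun.
  apply/closed_openC/accessible_closed_set1/hausdorff_accessible; exact: norm_hausdorff.
move=> x; rewrite inE /= => /eqP x0.
exact: inv_continuous.
Qed.

Lemma measurable_sumsq (R : realType) m (p : pred 'I_m) :
  measurable_fun [set: m.-tuple R] (fun t => \sum_(i < m | p i) tnth t i ^+ 2).
Proof.
under eq_fun do rewrite -big_filter.
apply: measurable_sum => i; apply: measurable_funX; exact: measurable_tnth.
Qed.

Lemma measurable_G (R : realType) j k (hjk : (j < k)%N) (a : 'I_k.+1) :
  measurable_fun [set: k.+1.-tuple R] (fun t => @G R j k a (tnth t)).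
Proof.
rewrite /G /SJ /SK.
apply: measurable_funM; apply: measurable_funM.
- apply: measurable_funX; exact: measurable_tnth.
- apply: measurableT_comp; [exact: measurable_inv|exact: measurable_sumsq].
- apply: measurable_funX; exact: measurable_tnth.
- apply: measurableT_comp; [exact: measurable_inv|exact: measurable_sumsq].
Qed.

Lemma measurable_C (R : realType) k (a : 'I_k.+1) :
  measurable_fun [set: k.+1.-tuple R] (fun t => @C R k a (tnth t)).
Proof.
rewrite /C /SK.
apply: measurable_funM.
- apply: measurable_funX; exact: measurable_tnth.
- apply: measurableT_comp; [exact: measurable_inv|exact: measurable_sumsq].
Qed.

Theorem lemma4p3 (d : measure_display) (T : measurableType d) (R : realType)
    (P : probability T R) (X : nat -> {RV P >-> R}) :
  iid X ->
  symmetric_rv (X 0%N) ->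
  P (X 0%N @^-1` [set 0]) = 0%E ->
  in_domain_of_attraction_std_normal X ->
  forall j k : nat, (1 <= j)%N -> (j < k)%N ->
    ('E_P[(fun w => (X j w ^+ 2 / Vsq X j.+1 w) * (X k w ^+ 2 / Vsq X k.+1 w))%R]
    = ((j.+1%:R * k.+1%:R)^-1)%:E)%E.
Proof.
move=> [hind hid] _ h0 _ j k hj hjk.
pose s0 : 'I_k.+1 -> nat := fun i => nat_of_ord i.
have s0inj : injective s0 by exact: val_inj.
pose U (w : T) : 'I_k.+1 -> R := tnth (Fv X s0 w).
have UE w (i : 'I_k.+1) : U w i = X i w by rewrite /U tnth_mktuple.
pose intg (H : ('I_k.+1 -> R) -> R) := (\int[P]_w (H (U w))%:E)%E.
have mU (H : ('I_k.+1 -> R) -> R) :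
    measurable_fun setT (fun t : k.+1.-tuple R => H (tnth t)) ->
    measurable_fun setT (fun w => (H (U w))%:E).
  move=> mH.
  have mH' : measurable_fun setT (fun t : k.+1.-tuple R => (H (tnth t))%:E).
    exact/measurable_EFinP.
  exact: (measurableT_comp mH' (@measurable_Fv _ _ _ P X _ s0)).
have perm_int (H : ('I_k.+1 -> R) -> R) (tau : {perm 'I_k.+1}) :
    measurable_fun setT (fun t : k.+1.-tuple R => H (tnth t)) -> (forall u, 0 <= H u) ->
    (\int[P]_w (H (U w \o tau))%:E = intg H)%E.
  move=> mH H0.
  have sinj : injective (fun i => s0 (tau i)) by move=> x y /s0inj /perm_inj.
  rewrite /intg -(@int_eq _ _ _ P X _ hind hid _ _ (fun t => (H (tnth t))%:E) sinj s0inj).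
  - apply: eq_integral => w _; congr (_%:E); congr H; apply/funext => i /=.
    by rewrite /U !tnth_mktuple.
  - exact/measurable_EFinP.
  - by move=> t; rewrite lee_fin.
have mN : measurable (X 0%N @^-1` [set 0]).
  rewrite -[X in measurable X]setTI.
  have := measurable_funPT (X 0%N) measurableT.
  move=> /(_ [set 0]); apply.
  apply: closed_measurable.
  apply/accessible_closed_set1/hausdorff_accessible; exact: norm_hausdorff.
have csum (x : \bar R) m : (\sum_(i < m) x = x *+ m)%E.
  elim: m => [|m IH]; first by rewrite big_ord0.
  rewrite big_ord_recr /= IH; exact: (esym (mulrSr _ _)).
pose J := @jo j k hjk.
pose Gj (a : 'I_k.+1) := @G R j k a.
pose Ck (a : 'I_k.+1) := @C R k a.
have Gperm (a : 'I_k.+1) : (a < j.+1)%N -> intg (Gj a) = intg (Gj J).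
  move=> ha; rewrite -(perm_int (Gj J) (tperm a J)).
  - by apply: eq_integral => w _; rewrite /Gj (@G_perm R j k hjk a _ ha).
  - exact: measurable_G.
  - exact: G_ge0.
have Cperm (a : 'I_k.+1) : intg (Ck a) = intg (Ck ord_max).
  rewrite -(perm_int (Ck ord_max) (tperm a ord_max)).
  - by apply: eq_integral => w _; rewrite /Ck C_perm.
  - exact: measurable_C.
  - exact: C_ge0.
have hG : (intg (Ck ord_max) =
    \sum_(a <- [seq a : 'I_k.+1 <- index_enum 'I_k.+1 | (a < j.+1)%N]) intg (Gj a))%E.
  rewrite /intg -ge0_integral_sum //; last 2 first.
  - by move=> a; apply: mU; exact: measurable_G.
  - by move=> a w _; rewrite lee_fin; exact: G_ge0.
  apply: ae_eq_integral => //.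
  - by apply: mU; exact: measurable_C.
  - by apply: emeasurable_sum => a; apply: mU; exact: measurable_G.
  exists (X 0%N @^-1` [set 0]); split => // w /= hw.
  apply: contrapT => /eqP Xw0; apply: hw => _.
  rewrite sumEFin big_filter /Gj /Ck (@G_sum R j k) // UE //.
have hC : (1 = \sum_(a <- index_enum 'I_k.+1) intg (Ck a))%E.
  rewrite /intg -ge0_integral_sum //; last 2 first.
  - by move=> a; apply: mU; exact: measurable_C.
  - by move=> a w _; rewrite lee_fin; exact: C_ge0.
  transitivity (\int[P]_w (cst 1%E) w)%E.
    by rewrite integral_cst // mul1e; exact/esym/probability_setT.
  apply: ae_eq_integral => //.
  - by apply: emeasurable_sum => a; apply: mU; exact: measurable_C.
  exists (X 0%N @^-1` [set 0]); split => // w /= hw.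
  apply: contrapT => /eqP Xw0; apply: hw => _.
  by rewrite sumEFin /Ck C_sum // UE.
have hGs : (intg (Ck ord_max) = intg (Gj J) *+ j.+1)%E.
  rewrite hG big_filter.
  rewrite (eq_bigr (fun _ => intg (Gj J))); last by move=> a ha; exact: Gperm.
  by rewrite -(big_ord_widen k.+1 (fun _ => intg (Gj J)) (ltnW hjk : (j.+1 <= k.+1)%N)) csum.
have hCs : (1 = intg (Ck ord_max) *+ k.+1)%E.
  rewrite hC (eq_bigr (fun _ => intg (Ck ord_max))); last by move=> a _; exact: Cperm.
  exact: csum.
have UE' w : U w = fun i => X i w by apply/funext => i; exact: UE.
have hE : ('E_P[(fun w => (X j w ^+ 2 / Vsq X j.+1 w) * (X k w ^+ 2 / Vsq X k.+1 w))%R]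
    = intg (Gj J))%E.
  rewrite unlock /intg; apply: eq_integral => w _.
  rewrite /Gj /G /SJ /SK /Vsq (big_ord_widen k.+1 (fun i => X i w ^+ 2) (ltnW hjk : (j.+1 <= k.+1)%N)).
  rewrite UE' /=; reflexivity.
rewrite hE.
have e0 : (0 <= intg (Gj J))%E by apply: integral_ge0 => w _; rewrite lee_fin; exact: G_ge0.
have c0 : (0 <= intg (Ck ord_max))%E by apply: integral_ge0 => w _; rewrite lee_fin; exact: C_ge0.
move: hGs hCs e0 c0.
generalize (intg (Gj J)) (intg (Ck ord_max)) => e c.
case: c => [rc| |]; first last.
- by move=> _ _ _; rewrite leNgt ltNye.
- by move=> _; rewrite enatmul_pinfty.
case: e => [r| |]; first last.
- by move=> _ _; rewrite leNgt ltNye.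
- by move=> /eqP; rewrite enatmul_pinfty.
move=> he hc _ _.
rewrite -EFin_natmul in he.
case: he => he.
have {}hc : rc *+ k.+1 = 1 by apply: EFin_inj; rewrite EFin_natmul -hc.
apply: congr1.
have hnz : (j.+1%:R * k.+1%:R : R) != 0 by rewrite mulf_neq0 // pnatr_eq0.
apply: (mulIf hnz); rewrite mulVf //.
by rewrite mulrA !mulr_natr -he hc.
Qed.
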